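(* Let trimming proportions satisfy instead $0\le a_i\le a_j<\bar b_i\le\bar b_j\le1$ (with $\bar v:=1-v$), and assume the integrals $\kappa_m$ below are finite. Then (i) $\zeta(a_i,\bar b_j)>0$; (iii) $0<\zeta_r\le1$; (iv) $\kappa_2(a_j,\bar b_j)\ge\zeta_r\,\kappa_1^2(a_i,\bar b_i)$; (v) for all $\sigma>0,\beta>0$, $T_2-\zeta_rT_1^2\ge0$; and, in place of the ordering in the previous case, $\kappa_m(a_i,\bar b_i)\ge\kappa_m(a_j,\bar b_j)$ for every odd positive integer $m$.
   Context: $\Delta(u):=\log(-\log u)$ for $u\in(0,1)$. For $0\le a<b\le1$, $\kappa_m(a,b):=\frac{1}{b-a}\int_a^b[\Delta(u)]^m\,du$. For indices $s,t$, $\zeta(a_s,\bar b_t):=\kappa_1^2(a_s,\bar b_s)-2\kappa_1(a_s,\bar b_s)\kappa_1(a_t,\bar b_t)+\kappa_2(a_t,\bar b_t)$, and $\zeta_r:=\zeta(a_j,\bar b_j)/\zeta(a_i,\bar b_j)$. $T_1=\log\sigma-\beta\kappa_1(a_i,\bar b_i)$, $T_2=(\log\sigma)^2-2\beta\log(\sigma)\kappa_1(a_j,\bar b_j)+\beta^2\kappa_2(a_j,\bar b_j)$. *)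

(* Defs.v *)
From HB Require Import structures.
From mathcomp Require Import all_boot all_order all_algebra.
From mathcomp Require Import all_classical all_reals all_analysis.
Set Implicit Arguments. Unset Strict Implicit. Unset Printing Implicit Defensive.
Import Order.TTheory GRing.Theory Num.Theory.
Local Open Scope classical_set_scope.
Local Open Scope ring_scope.

Definition Delta (R : realType) (u : R) : R := ln (- ln u).

Definition kappa (R : realType) (m : nat) (a b : R) : R :=
  (b - a)^-1 * Rintegral (@lebesgue_measure R) `[a, b] (fun u => Delta u ^+ m).

(* zeta(a_s, bbar_t) with (a_s, bbar_s) and (a_t, bbar_t) the two intervals *)
Definition zeta (R : realType) (as_ bs at_ bt : R) : R :=
  kappa 1 as_ bs ^+ 2 - 2 * kappa 1 as_ bs * kappa 1 at_ bt + kappa 2 at_ bt.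

Definition zeta_r (R : realType) (ai bbi aj bbj : R) : R :=
  zeta aj bbj aj bbj / zeta ai bbi aj bbj.

Definition T1 (R : realType) (ai bbi : R) (sigma beta : R) : R :=
  ln sigma - beta * kappa 1 ai bbi.

Definition T2 (R : realType) (aj bbj : R) (sigma beta : R) : R :=
  ln sigma ^+ 2 - 2 * beta * ln sigma * kappa 1 aj bbj + beta ^+ 2 * kappa 2 aj bbj.

(* Main.v *)
Require Import Defs.
From HB Require Import structures.
From mathcomp Require Import all_boot all_order all_algebra.
From mathcomp Require Import all_classical all_reals all_analysis.
From mathcomp Require Import ring lra.
Import Order.TTheory GRing.Theory Num.Theory.
Local Open Scope classical_set_scope.
Local Open Scope ring_scope.

Section Aux.
Context {R : realType}.
Notation mu := (@lebesgue_measure R).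

Lemma itv_cst_int (a b k : R) : mu.-integrable `[a, b] (EFin \o cst k).
Proof.
apply: continuous_compact_integrable; first exact: segment_compact.
by apply: continuous_subspaceT => x; exact: cst_continuous.
Qed.

Lemma mu_itv (a b : R) : a <= b -> fine (mu `[a, b]) = b - a.
Proof.
move=> ab; rewrite lebesgue_measure_itv /=.
rewrite lte_fin; case: (ltgtP a b) ab => //=.
by move=> -> _; rewrite subrr.
Qed.

Lemma split_int (f : R -> R) a x b : a <= x -> x <= b ->
  mu.-integrable `[a, b] (EFin \o f) ->
  Rintegral mu `[a, b] f = Rintegral mu `[a, x] f + Rintegral mu `[x, b] f.
Proof.
move=> ax xb fi.
have := @Rintegral_itvB R f (BLeft a) (BRight b) x fi.
rewrite !bnd_simp => /(_ ax xb) H.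
rewrite -(@Rintegral_itv_obnd_cbnd R x (BRight b) f); last first.
  apply: integrableS fi => //; apply: subset_itvr; by rewrite bnd_simp.
by rewrite -H addrC subrK.
Qed.

Lemma int_open (f : R -> R) a b : mu.-integrable `[a, b] (EFin \o f) ->
  Rintegral mu `[a, b] f = Rintegral mu `]a, b[ f.
Proof.
move=> fi.
rewrite -(@Rintegral_itv_bndo_bndc R (BLeft a) b f); last first.
  by apply: integrableS fi => //; apply: subset_itvl; rewrite bnd_simp.
rewrite -(@Rintegral_itv_obnd_cbnd R a (BLeft b) f) //.
by apply: integrableS fi => //; apply: subset_itv; rewrite bnd_simp.
Qed.

Lemma int_cst (a b k : R) : a <= b -> Rintegral mu `[a, b] (fun=> k) = k * (b - a).
Proof. by move=> ab; rewrite Rintegral_cst // mu_itv. Qed.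

Lemma int_ub (f : R -> R) a b t : a < b -> mu.-integrable `[a, b] (EFin \o f) ->
  (forall x, a < x < b -> f x <= t) -> Rintegral mu `[a, b] f <= t * (b - a).
Proof.
move=> ab fi ft.
rewrite -(@int_cst a b t (ltW ab)) int_open // [X in _ <= X]int_open; last exact: itv_cst_int.
apply: le_Rintegral => //.
all: try by move=> x; rewrite /= in_itv /= => /ft.
all: by first [ apply: integrableS fi | apply: integrableS (itv_cst_int a b t) ] => //; apply: subset_itv; rewrite bnd_simp.
Qed.

Lemma int_lb (f : R -> R) a b t : a < b -> mu.-integrable `[a, b] (EFin \o f) ->
  (forall x, a < x < b -> t <= f x) -> t * (b - a) <= Rintegral mu `[a, b] f.
Proof.
move=> ab fi ft.
rewrite -(@int_cst a b t (ltW ab)) [X in _ <= X]int_open // [X in X <= _]int_open; last exact: itv_cst_int.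
apply: le_Rintegral => //.
all: try by move=> x; rewrite /= in_itv /= => /ft.
all: by first [ apply: integrableS fi | apply: integrableS (itv_cst_int a b t) ] => //; apply: subset_itv; rewrite bnd_simp.
Qed.

Lemma int_pt (f : R -> R) a : Rintegral mu `[a, a] f = 0.
Proof. by rewrite set_itv1 Rintegral_set1. Qed.

Lemma avg_mono (f : R -> R) a a' b b' :
  0 <= a -> a <= a' -> a' < b -> b <= b' -> b' <= 1 ->
  (forall x y, 0 < x -> x <= y -> y < 1 -> f y <= f x) ->
  mu.-integrable `[a, b] (EFin \o f) -> mu.-integrable `[a', b'] (EFin \o f) ->
  (b' - a')^-1 * Rintegral mu `[a', b'] f <= (b - a)^-1 * Rintegral mu `[a, b] f.
Proof.
move=> a0 aa' a'b bb' b'1 fdec fi fj.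
have fM : mu.-integrable `[a', b] (EFin \o f).
  by apply: integrableS fi => //; apply: subset_itv; rewrite bnd_simp // ltW.
set I := Rintegral mu `[a', b] f.
set m := I / (b - a').
have ba'0 : 0 < b - a' by rewrite subr_gt0.
have hm : m * (b - a') = I by rewrite /m divfK // gt_eqF.
have h1 : m * (a' - a) <= Rintegral mu `[a, a'] f.
  case: (eqVneq a a') => [<-|ne]; first by rewrite int_pt subrr mulr0.
  have aa : a < a' by rewrite lt_neqAle ne.
  have lb : f a' * (a' - a) <= Rintegral mu `[a, a'] f.
    apply: int_lb => //.
      by apply: integrableS fi => //; apply: subset_itv; rewrite bnd_simp // ltW.
    move=> x /andP[ax xa']; apply: fdec; [lra|lra|lra].
  have ub : I <= f a' * (b - a').
    apply: int_ub => // x /andP[ax xa']; apply: fdec; [lra|lra|lra].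
  have : m <= f a'.
    by rewrite /m ler_pdivrMr.
  move=> mf; apply: le_trans lb; apply: ler_wpM2r => //; lra.
have h2 : Rintegral mu `[b, b'] f <= m * (b' - b).
  case: (eqVneq b b') => [<-|ne]; first by rewrite int_pt subrr mulr0.
  have bb2 : b < b' by rewrite lt_neqAle ne.
  have ub : Rintegral mu `[b, b'] f <= f b * (b' - b).
    apply: int_ub => //.
      by apply: integrableS fj => //; apply: subset_itv; rewrite bnd_simp // ltW.
    move=> x /andP[ax xa']; apply: fdec; [lra|lra|lra].
  have lb : f b * (b - a') <= I.
    apply: int_lb => // x /andP[ax xa']; apply: fdec; [lra|lra|lra].
  have : f b <= m.
    by rewrite /m ler_pdivlMr.
  move=> mf; apply: le_trans ub _; apply: ler_wpM2r => //; lra.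
rewrite (@split_int f _ _ _ (ltW a'b) bb' fj) -/I (@split_int f _ _ _ aa' (ltW a'b) fi) -/I.
apply: (@le_trans _ _ m).
  rewrite mulrC ler_pdivrMr; last lra.
  rewrite -hm; lra.
rewrite mulrC ler_pdivlMr; last lra.
rewrite -hm; lra.
Qed.
Lemma int_comb (u v : R) (f1 f2 : R -> R) k :
  mu.-integrable `[u, v] (EFin \o f1) -> mu.-integrable `[u, v] (EFin \o f2) ->
  mu.-integrable `[u, v] (EFin \o (fun x => f1 x + k * f2 x)).
Proof.
move=> i1 i2.
have H : mu.-integrable `[u, v] ((EFin \o f1) \+ (fun x => k%:E * (EFin \o f2) x))%E.
  by apply: integrableD => //; apply: integrableZl.
by apply: (eq_integrable _ _ _ _ H) => //.
Qed.

Lemma var_pos (f g : R -> R) a b : 0 <= a -> a < b -> b <= 1 ->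
  (forall x y, 0 < x -> x < y -> y < 1 -> f y < f x) ->
  (forall x, g x = f x ^+ 2) ->
  mu.-integrable `[a, b] (EFin \o f) -> mu.-integrable `[a, b] (EFin \o g) ->
  ((b - a)^-1 * Rintegral mu `[a, b] f) ^+ 2 < (b - a)^-1 * Rintegral mu `[a, b] g.
Proof.
move=> a0 ab b1 fdec hg fi gi.
set L := b - a.
have L0 : 0 < L by rewrite subr_gt0.
set c := L^-1 * Rintegral mu `[a, b] f.
have hIf : Rintegral mu `[a, b] f = c * L by rewrite /c mulrC mulrA mulfV ?gt_eqF // mul1r.
pose h := fun x => (f x - c) ^+ 2.
have ui : mu.-integrable `[a, b] (EFin \o (fun x => g x + (-2 * c) * f x)).
  exact: int_comb.
have hi0 : mu.-integrable `[a, b] (EFin \o (fun x => (g x + (-2 * c) * f x) + c ^+ 2 * (cst 1 x))).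
  by apply: int_comb => //; exact: itv_cst_int.
have hi : mu.-integrable `[a, b] (EFin \o h).
  apply: (eq_integrable _ _ _ _ hi0) => // x _; rewrite /h /= hg; congr (_%:E); rewrite /cst; ring.
have hint : Rintegral mu `[a, b] h = Rintegral mu `[a, b] g - c ^+ 2 * L.
  have -> : Rintegral mu `[a, b] h = Rintegral mu `[a, b] (fun x => (g x + (-2 * c) * f x) + c ^+ 2).
    by apply: eq_Rintegral => x _; rewrite /h hg; ring.
  rewrite RintegralD //; last exact: (itv_cst_int a b (c ^+ 2)).
  rewrite RintegralD //.
  rewrite (@RintegralZl _ _ _ mu _ f (-2 * c)) // (@int_cst a b (c ^+ 2) (ltW ab)) hIf -/L; ring.
  by apply: (eq_integrable _ _ _ _ (integrableZl _ (-2 * c) fi)) => // x _; rewrite /= EFinM.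
have hpos : 0 < Rintegral mu `[a, b] h.
  set s := a + L / 2.
  have sdef : s = a + L / 2 by [].
  have Ldef : L = b - a by [].
  have hsub : forall u v, a <= u -> u <= v -> v <= b -> mu.-integrable `[u, v] (EFin \o h).
    move=> u v au uv vb; apply: integrableS hi => //; apply: subset_itv; by rewrite bnd_simp.
  have hge : forall u v, 0 <= Rintegral mu `[u, v] h.
    by move=> u v; apply: Rintegral_ge0 => x _; rewrite /h sqr_ge0.
  case: (lerP c (f s)) => cs.
  - set p := a + L / 4.
    have pdef : p = a + L / 4 by [].
    have ap : a < p by rewrite /p; lra.
    have pb : p < b by rewrite /p /L; lra.
    have ps : p < s by rewrite /p /s; lra.
    rewrite (@split_int h a p b (ltW ap) (ltW pb) hi).
    have fps : f s < f p by apply: fdec; lra.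
    have lb : (f p - c) ^+ 2 * (p - a) <= Rintegral mu `[a, p] h.
      apply: int_lb => //; first by apply: hsub; lra.
      move=> x /andP[ax xp]; rewrite /h.
      have : f p < f x by apply: fdec; lra.
      move=> fx; nra.
    have P : 0 < (f p - c) ^+ 2 * (p - a).
      by apply: mulr_gt0; [apply: exprn_gt0; lra | lra].
    apply: (lt_le_trans P); rewrite -[X in X <= _]addr0; exact: lerD lb (hge p b).
  - set r := a + 3 * L / 4.
    have rdef : r = a + 3 * L / 4 by [].
    have ar : a < r by rewrite /r; lra.
    have rb : r < b by rewrite /r /L; lra.
    have sr : s < r by rewrite /r /s; lra.
    rewrite (@split_int h a r b (ltW ar) (ltW rb) hi).
    have fps : f r < f s by apply: fdec; lra.
    have lb : (c - f r) ^+ 2 * (b - r) <= Rintegral mu `[r, b] h.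
      apply: int_lb => //; first by apply: hsub; lra.
      move=> x /andP[ax xp]; rewrite /h.
      have : f x < f r by apply: fdec; lra.
      move=> fx; nra.
    have P : 0 < (c - f r) ^+ 2 * (b - r).
      by apply: mulr_gt0; [apply: exprn_gt0; lra | lra].
    apply: (lt_le_trans P); rewrite -[X in X <= _]add0r; exact: lerD (hge a r) lb.
rewrite -/c [_^-1 * _]mulrC ltr_pdivlMr //.
have := hpos; rewrite hint; lra.
Qed.
End Aux.

Section Aux2.
Context {R : realType}.
Lemma oddX_le (m : nat) (x y : R) : odd m -> x <= y -> x ^+ m <= y ^+ m.
Proof.
move=> om xy.
case: (lerP 0 x) => x0.
  by apply: lerXn2r => //; rewrite nnegrE //; lra.
case: (lerP 0 y) => y0.
  apply: (@le_trans _ _ 0).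
    by rewrite real_exprn_odd_le0 ?num_real //; lra.
  by rewrite real_exprn_odd_ge0 ?num_real.
have : (- y) ^+ m <= (- x) ^+ m by apply: lerXn2r; rewrite ?nnegrE; lra.
have e : forall z : R, (- z) ^+ m = - z ^+ m.
  by move=> z; rewrite exprNn -signr_odd om expr1 mulN1r.
by rewrite !e lerN2.
Qed.

Lemma Delta_dec (x y : R) : 0 < x -> x < y -> y < 1 -> Delta y < Delta x.
Proof.
move=> x0 xy y1; rewrite /Delta.
have lxy : ln x < ln y by rewrite ltr_ln ?posrE; lra.
have ly : ln y < 0 by apply: ln_lt0; apply/andP; split; lra.
by rewrite ltr_ln ?posrE; lra.
Qed.

Lemma DeltaX_dec (m : nat) (x y : R) : odd m -> 0 < x -> x <= y -> y < 1 ->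
  Delta y ^+ m <= Delta x ^+ m.
Proof.
move=> om x0 xy y1; apply: oddX_le => //.
case: (eqVneq x y) => [->//|ne].
by apply/ltW/Delta_dec => //; rewrite lt_neqAle ne.
Qed.
End Aux2.


Theorem corollary3 (R : realType) (a_i a_j b_i b_j : R) :
  0 <= a_i -> a_i <= a_j -> a_j < 1 - b_i -> 1 - b_i <= 1 - b_j -> 1 - b_j <= 1 ->
  (forall m : nat, (0 < m)%N ->
     (@lebesgue_measure R).-integrable `[a_i, 1 - b_i]
        (fun u => (Delta u ^+ m)%:E) /\
     (@lebesgue_measure R).-integrable `[a_j, 1 - b_j]
        (fun u => (Delta u ^+ m)%:E)) ->
  let zr := zeta_r a_i (1 - b_i) a_j (1 - b_j) in
  [/\ 0 < zeta a_i (1 - b_i) a_j (1 - b_j),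
      0 < zr /\ zr <= 1,
      kappa 2 a_j (1 - b_j) >= zr * kappa 1 a_i (1 - b_i) ^+ 2,
      (forall sigma beta : R, 0 < sigma -> 0 < beta ->
         T2 a_j (1 - b_j) sigma beta - zr * T1 a_i (1 - b_i) sigma beta ^+ 2 >= 0) &
      (forall m : nat, odd m ->
         kappa m a_i (1 - b_i) >= kappa m a_j (1 - b_j))].
Proof.
move=> a0 aa ab bb b1 hint zr.
have odd_part : forall m : nat, odd m -> kappa m a_i (1 - b_i) >= kappa m a_j (1 - b_j).
  move=> m om; have m0 : (0 < m)%N by case: m om.
  have [i1 i2] := hint m m0.
  apply: avg_mono => //.
  by move=> x y x0 xy y1; apply: DeltaX_dec.
have [i11 i12] := hint 1%N isT.
have [i21 i22] := hint 2%N isT.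
have Vpos : kappa 1 a_j (1 - b_j) ^+ 2 < kappa 2 a_j (1 - b_j).
{ rewrite /kappa; apply: (@var_pos R (fun u => Delta u ^+ 1) (fun u => Delta u ^+ 2)) => //.
  all: try lra.
  all: try by move=> x; rewrite expr1.
  all: by move=> x y x0 xy y1; rewrite !expr1; apply: Delta_dec. }
set k1i := kappa 1 a_i (1 - b_i) in odd_part *.
set k1j := kappa 1 a_j (1 - b_j) in Vpos *.
set k2j := kappa 2 a_j (1 - b_j) in Vpos *.
set V := k2j - k1j ^+ 2.
have V0 : 0 < V by rewrite /V subr_gt0.
have zV : zeta a_j (1 - b_j) a_j (1 - b_j) = V by rewrite /zeta -/k1j -/k2j /V; ring.
set Z := zeta a_i (1 - b_i) a_j (1 - b_j).
have ZE : Z = (k1i - k1j) ^+ 2 + V by rewrite /Z /zeta -/k1i -/k1j -/k2j /V; ring.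
have Z0 : 0 < Z by rewrite ZE; apply: ltr_wpDl => //; exact: sqr_ge0.
have zrE : zr = V / Z by rewrite /zr /zeta_r zV.
split => //.
- split; rewrite zrE; first exact: divr_gt0.
  by rewrite ler_pdivrMr // mul1r ZE lerDr sqr_ge0.
- rewrite zrE mulrAC ler_pdivrMr //.
  have -> : k2j * Z = V * k1i ^+ 2 + (V - k1j * (k1i - k1j)) ^+ 2.
    by rewrite ZE /V; ring.
  by rewrite lerDl sqr_ge0.
- move=> sigma beta _ _.
  rewrite zrE mulrAC subr_ge0 ler_pdivrMr //.
  have -> : T2 a_j (1 - b_j) sigma beta * Z =
    V * T1 a_i (1 - b_i) sigma beta ^+ 2 +
    ((ln sigma - beta * k1j) * (k1i - k1j) + beta * V) ^+ 2.
    by rewrite /T2 /T1 -/k1i -/k1j -/k2j ZE /V; ring.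
  by rewrite lerDl sqr_ge0.
Qed.
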